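(* Let $p$ be a prime with $p\equiv 1\pmod{12}$, and let $a,b$ be positive integers with $p=a^2-12b^2$. Then the equation $z^4+360z^2-48=0$ has a solution $z\in\mathbb{F}_p$ if and only if $a\equiv 1\pmod 3$. *)

(* Defs.v *)
From mathcomp Require Import all_boot all_order all_algebra.

(* Main.v *)
Require Import Defs.
From mathcomp Require Import all_boot all_order all_algebra.
From mathcomp Require Import fingroup cyclic finalg finfield.
From mathcomp Require Import zify ring lra.
Import GRing.Theory.
Local Open Scope ring_scope.

Lemma gen_exists (F : finFieldType) : exists g : F,
  (forall x, x != 0 -> exists k, x = g ^+ k) /\
  (forall n, (g ^+ n == 1) = (#|F|.-1 %| n)%N).
Proof.
have /cyclicP [u Hu] := field_unit_group_cyclic [set: {unit F}]%G.
exists (FinRing.uval u); split.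
  move=> x x0; have Ux : x \is a GRing.unit by rewrite unitfE.
  have : FinRing.Unit Ux \in <[u]>%g by rewrite -Hu inE.
  case/cycleP=> k Hk; exists k.
  by rewrite -FinRing.val_unitX -Hk.
move=> n.
have -> : (#|F|.-1 = #[u]%g)%N by rewrite /order -Hu /= card_finField_unit.
rewrite order_dvdn -FinRing.val_unitX.
apply/eqP/eqP => [h|->]; last by [].
by apply: val_inj; rewrite h.
Qed.

Section FF.
Variable F : finFieldType.
Local Notation N := (#|F|.-1).

Lemma fermat (x : F) : x != 0 -> x ^+ N = 1.
Proof.
move=> x0; have := expf_card x.
have cpos : (0 < #|F|)%N by apply/card_gt0P; exists 0.
rewrite -{1}(prednK cpos) exprS => h.
by apply: (mulfI x0); rewrite h mulr1.
Qed.

Lemma unity_root d : (d %| N)%N -> exists w : F, w ^+ d = 1 /\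
  forall j, w ^+ j = 1 -> (d %| j)%N.
Proof.
move=> dN; have [g [_ Hg]] := gen_exists F.
have Npos : (0 < N)%N.
  rewrite -ltnS prednK; last by apply/card_gt0P; exists 0.
  exact: finNzRing_gt1.
have d0 : (0 < d)%N by apply: dvdn_gt0 dN.
exists (g ^+ (N %/ d)); split.
  by apply/eqP; rewrite -exprM Hg divnK.
move=> j /eqP; rewrite -exprM Hg.
have {1}-> : N = (d * (N %/ d))%N by rewrite mulnC divnK.
by rewrite mulnC dvdn_pmul2l // divn_gt0 // dvdn_leq.
Qed.

Hypothesis Fodd : odd #|F|.

Lemma N_half : N = (N./2).*2.
Proof.
have cpos : (0 < #|F|)%N by apply/card_gt0P; exists 0.
rewrite -[N in LHS](odd_double_half N).
suff -> : odd N = false by [].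
by move: Fodd; rewrite -{1}(prednK cpos) /= => /negbTE.
Qed.

Lemma half_pos : (0 < N./2)%N.
Proof.
have : (1 < #|F|)%N by exact: finNzRing_gt1.
move: Fodd; case: #|F| => [|[|[|n]]] //=.
Qed.

Definition eul (x : F) := x ^+ N./2.

Lemma eul_sq (x : F) : x != 0 -> eul x = 1 \/ eul x = -1.
Proof.
move=> x0; have : eul x ^+ 2 = 1 by rewrite /eul -exprM muln2 -N_half fermat.
by move/eqP; rewrite sqrf_eq1 => /orP[] /eqP; [left|right].
Qed.

Lemma euler (x : F) : x != 0 -> eul x = 1 -> exists y, y ^+ 2 = x.
Proof.
move=> x0; have [g [Hx Hg]] := gen_exists F.
have [k ->] := Hx x x0; rewrite /eul -exprM => /eqP; rewrite Hg.
rewrite {1}N_half -muln2 mulnC dvdn_pmul2r ?half_pos // => /dvdnP[k' ->].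
by exists (g ^+ k'); rewrite -exprM mulnC.
Qed.

Lemma nonsq_exists : exists n : F, n != 0 /\ eul n = -1.
Proof.
have [g [Hx Hg]] := gen_exists F.
have g0 : g != 0.
  apply/eqP=> g0; move: (Hg N); rewrite dvdnn g0 expr0n.
  by case: N half_pos => //= ? _; rewrite eq_sym oner_eq0.
exists g; split => //; case: (@eul_sq g g0) => // /eqP.
rewrite /eul Hg => /(dvdn_leq half_pos).
rewrite {1}N_half -addnn => h; have := half_pos.
lia.
Qed.

End FF.

Section Gauss.
Variables (K L : finFieldType) (p : nat).
Hypotheses (chL : p \in [pchar L]) (Kodd : odd #|K|) (p_odd : odd p).
Variable E : K -> L.
Hypotheses (E_add : forall x y, E (x + y) = E x * E y) (E0 : E 0 = 1)
  (E1 : E 1 != 1).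

Lemma two_neq0 : (2%:R : L) != 0.
Proof.
rewrite -(dvdn_pcharf chL); apply/negP => /(dvdn_leq (isT : (0 < 2)%N)).
have := pcharf_prime chL; case: p p_odd => [|[|[|]]] //.
Qed.

Lemma sumE c : \sum_x E (c * x) = if c == 0 then #|K|%:R else 0.
Proof.
case: eqP => [->|/eqP c0].
  under eq_bigr do rewrite mul0r E0.
  by rewrite sumr_const.
have S1 : \sum_x E x = \sum_x E (c * x) by exact: reindex_inj (mulfI c0).
have S2 : \sum_x E x = \sum_x E (x + 1) by exact: reindex_inj (addIr 1).
rewrite -S1; move: S2; under [X in _ = X -> _]eq_bigr do rewrite E_add.
rewrite -mulr_suml => /eqP; rewrite -subr_eq0 -{1}[\sum_x E x]mulr1 -mulrBr.
rewrite mulf_eq0 subr_eq0 [1 == _]eq_sym (negbTE E1) orbF => /eqP //.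
Qed.


Hypothesis m1K : (-1 : K) != 1.

Definition chi (x : K) : L :=
  if x == 0 then 0 else if eul K x == 1 then 1 else -1.

Lemma eulM x y : eul K (x * y) = eul K x * eul K y.
Proof. by rewrite /eul exprMn. Qed.

Lemma chi0 : chi 0 = 0. Proof. by rewrite /chi eqxx. Qed.

Lemma chiM x y : chi (x * y) = chi x * chi y.
Proof.
rewrite /chi mulf_eq0; case: (x =P 0) => [_|/eqP x0]; first by rewrite mul0r.
case: (y =P 0) => [_|/eqP y0]; first by rewrite mulr0.
rewrite /= eulM.
have m1K' : (-1 : K) == 1 = false by apply/negbTE.
have e1 : (1 : K) == -1 = false by rewrite eq_sym.
case: (@eul_sq K Kodd _ x0) => ->; case: (@eul_sq K Kodd _ y0) => ->;
  rewrite ?mulr1 ?mul1r ?mulrNN ?mulr1 ?eqxx ?m1K'. all: rewrite ?mulr1 ?mul1r ?mulN1r ?mulrN1 ?opprK //.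
Qed.

Lemma chi1 : chi 1 = 1.
Proof. by rewrite /chi oner_eq0 /eul expr1n eqxx. Qed.

Lemma chi_sq x : x != 0 -> chi x * chi x = 1.
Proof.
move=> x0; rewrite /chi (negbTE x0).
by case: (_ == 1); rewrite ?mulr1 ?mulrNN ?mulr1.
Qed.

Lemma chi_sum : \sum_x chi x = 0.
Proof.
have [n [n0 en]] := nonsq_exists K Kodd.
have cn : chi n = -1 by rewrite /chi (negbTE n0) en (negbTE m1K).
have S1 : \sum_x chi x = \sum_x chi (n * x) by exact: reindex_inj (mulfI n0).
move: S1; under [X in _ = X -> _]eq_bigr do rewrite chiM.
rewrite -mulr_sumr cn mulN1r => /eqP; rewrite -subr_eq0 opprK.
rewrite -mulr2n -mulr_natr mulf_eq0 (negbTE two_neq0) orbF => /eqP //.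
Qed.


Definition gs := \sum_x chi x * E x.

Lemma gs2 : gs ^+ 2 = chi (-1) * #|K|%:R.
Proof.
rewrite expr2 /gs mulr_suml.
transitivity (\sum_x \sum_t chi t * E ((t + 1) * x)).
  apply: eq_bigr => x _; rewrite mulr_sumr.
  case: (x =P 0) => [->|/eqP x0].
    rewrite big1; last by move=> y _; rewrite chi0 !mul0r.
    under eq_bigr do rewrite mulr0 E0 mulr1.
    by rewrite chi_sum.
  rewrite (reindex_inj (mulfI x0)) /=.
  apply: eq_bigr => t _.
  by rewrite mulrACA -E_add chiM mulrA chi_sq // mul1r [(_ + 1) * x]mulrC mulrDr mulr1 addrC.
rewrite exchange_big /=.
under eq_bigr do rewrite -mulr_sumr sumE.
rewrite (bigD1 (-1)) //= addNr eqxx big1 ?addr0 // => t /negbTE tn.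
by rewrite addr_eq0 tn mulr0.
Qed.

Lemma E_exp x n : E x ^+ n = E (x *+ n).
Proof.
elim: n => [|n IH]; first by rewrite expr0 mulr0n E0.
by rewrite exprS IH mulrS E_add.
Qed.

Lemma chi_p x : chi x ^+ p = chi x.
Proof.
have p0 : (0 < p)%N by case: p p_odd.
rewrite /chi; case: (_ == 0); first by rewrite expr0n gtn_eqF.
case: (_ == 1); first by rewrite expr1n.
by rewrite -signr_odd p_odd expr1.
Qed.

Lemma chi_inv x : x != 0 -> chi x^-1 = chi x.
Proof.
move=> x0; have h : chi x * chi x^-1 = 1 by rewrite -chiM mulfV // chi1.
by rewrite -[chi x^-1]mul1r -(chi_sq x x0) -mulrA h mulr1.
Qed.

Hypothesis P0 : (p%:R : K) != 0.

Lemma gsp : gs ^+ p = chi (p%:R) * gs.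
Proof.
rewrite /gs -(pFrobenius_autE chL) rmorph_sum /=.
under eq_bigr do rewrite rmorphM /= !pFrobenius_autE chi_p E_exp -mulr_natl.
rewrite (reindex_inj (mulfI (invr_neq0 P0))) /= mulr_sumr.
apply: eq_bigr => y _.
by rewrite [p%:R * _]mulrA mulfV // mul1r chiM chi_inv // mulrA.
Qed.


Lemma qr_core : (#|K|%:R : L) != 0 -> (p %% 4 = 1)%N ->
  (#|K|%:R : L) ^+ (p.-1./2) = chi (p%:R).
Proof.
move=> Hq p4; set k := (p %/ 4)%N.
have hp : p = (2 * (2 * k)).+1 by rewrite {1}(divn_eq p 4) p4 addn1 mulnA mulnC.
have hm : p.-1./2 = (2 * k)%N by rewrite hp /= mul2n doubleK.
have cm1 : chi (-1) ^+ 2 = 1 by rewrite expr2 chi_sq // oppr_eq0 oner_eq0.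
have g20 : gs ^+ 2 != 0.
  rewrite gs2 mulf_eq0 negb_or Hq andbT; apply/eqP => h; move: cm1.
  by rewrite h expr0n /= => /eqP; rewrite eq_sym oner_eq0.
have g0 : gs != 0 by apply: contraNneq g20 => ->; rewrite expr0n.
have : gs ^+ p = gs ^+ p.-1 * gs by rewrite -exprSr hp.
rewrite gsp => /(mulIf g0) ->.
have hp1 : p.-1 = (2 * (2 * k))%N by rewrite hp.
by rewrite hm hp1 [gs ^+ _]exprM gs2 exprMn [chi _ ^+ _]exprM cm1 expr1n mul1r.
Qed.

End Gauss.

Lemma natr_eq1 (R : nzRingType) (p n : nat) : p \in [pchar R] -> (0 < n)%N ->
  ((n%:R : R) = 1) <-> (p %| n.-1)%N.
Proof.
move=> ch n0; rewrite (dvdn_pcharf ch) -subn1 natrB // subr_eq0.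
by split => [->|/eqP].
Qed.

Lemma val_Fp_add q (x y : 'F_q) : prime q -> val (x + y) = ((val x + val y) %% q)%N.
Proof. by move=> pq; rewrite /=; congr (_ %% _)%N; apply: Fp_cast. Qed.

Lemma QR (p q : nat) : prime p -> prime q -> p != q -> odd q ->
  (p %% 4 = 1)%N ->
  ((q%:R : 'F_p) ^+ (p.-1./2) = 1 <-> exists y : 'F_q, y ^+ 2 = p%:R).
Proof.
move=> pp pq pnq qodd p4.
have podd : odd p by rewrite (divn_eq p 4) p4 addn1 /= oddM andbF.
have q3 : (2 < q)%N.
  by have := prime_gt1 pq; move: qodd; case: (q) => [|[|[|]]].
have chK := pchar_Fp pq; have chP := pchar_Fp pp.
have cardK : #|'F_q| = q by rewrite card_Fp.
have Kodd : odd #|'F_q| by rewrite cardK.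
have P0 : (p%:R : 'F_q) != 0.
  by rewrite -(dvdn_pcharf chK) dvdn_prime2 // eq_sym.
have k0 : (0 < q.-1)%N by case: (q) q3 => [|[]].
have [L chL cardL] := pPrimePowerField pp k0.
have qdiv : (q %| #|L|.-1)%N.
  have pk0 : (0 < p ^ q.-1)%N by rewrite expn_gt0 prime_gt0.
  rewrite cardL -(@natr_eq1 _ _ _ chK pk0).
  by rewrite natrX; move: (@fermat _ _ P0); rewrite card_Fp.
have [z [zq zj]] := @unity_root L _ qdiv.
pose E (x : 'F_q) := z ^+ (val x).
have E_add : forall x y, E (x + y) = E x * E y.
  move=> x y; rewrite /E val_Fp_add // -exprD.
  by rewrite (expr_mod _ zq).
have E0 : E 0 = 1 by rewrite /E /= expr0.
have E1 : E 1 != 1.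
  rewrite /E /= Fp_cast // modn_small ?prime_gt1 // expr1.
  by apply/eqP => /eqP; rewrite -(expr1 z) => /eqP /zj; rewrite dvdn1; case: (q) q3 => [|[]].
have m1K : (-1 : 'F_q) != 1.
  apply/eqP => h; have : (2%:R : 'F_q) = 0 by rewrite -(addNr 1) h.
  move/eqP; rewrite -(dvdn_pcharf chK) => /(dvdn_leq (isT : (0 < 2)%N)).
  by rewrite leqNgt q3.
have Hq : (#|'F_q|%:R : L) != 0.
  by rewrite cardK -(dvdn_pcharf chL) dvdn_prime2 //.
have core := @qr_core _ _ _ chL Kodd podd _ E_add E0 E1 m1K P0 Hq p4.
rewrite cardK in core.
have p0 : (0 < q ^ p.-1./2)%N by rewrite expn_gt0 prime_gt0.
rewrite -natrX (@natr_eq1 _ _ _ chP p0) -(@natr_eq1 _ _ _ chL p0) natrX core.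
rewrite /chi (negbTE P0); split.
  case: eqP => [e1 _|_ /eqP]; first exact: (@euler _ Kodd _ P0 e1).
  rewrite -subr_eq0 -opprD oppr_eq0 => h.
  by move: (@two_neq0 _ _ chL podd); rewrite -[2%:R]/(1 + 1 : L) h.
case=> y hy; have y0 : y != 0 by apply: contraNneq P0 => yz; rewrite -hy yz expr0n.
by rewrite /eul -hy -exprM mul2n -(@N_half _ Kodd) (@fermat _ _ y0) eqxx.
Qed.


Section Quartic.
Variable F : fieldType.
Hypothesis two0 : (2%:R : F) != 0.

Lemma tm2 (t : F) : t ^+ 2 = 12%:R -> t - 2%:R != 0.
Proof.
move=> ht; apply/eqP => h.
have t2 : t = 2%:R by apply/eqP; rewrite -subr_eq0 h.
have : (2%:R : F) ^+ 3 = 0.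
  have -> : (2%:R : F) ^+ 3 = 12%:R - 2%:R ^+ 2 by ring.
  by rewrite -ht t2 subrr.
by move/eqP; rewrite expf_eq0 /= (negbTE two0).
Qed.

Lemma ident1 (t : F) : t * (t - 2%:R) ^+ 6 - 256%:R * (52%:R * t - 180%:R) =
  (t ^+ 2 - 12%:R) * (t^+5 - 12%:R * t^+4 + 72%:R * t^+3 - 304%:R * t^+2 + 1104%:R * t - 3840%:R).
Proof. ring. Qed.

Lemma n256 : (256%:R : F) != 0.
Proof.
have -> : (256%:R : F) = 2%:R ^+ 8 by ring.
by rewrite expf_neq0.
Qed.

Lemma n16 : (16%:R : F) != 0.
Proof.
have -> : (16%:R : F) = 2%:R ^+ 4 by ring.
by rewrite expf_neq0.
Qed.

Lemma case1 (t z : F) : t ^+ 2 = 12%:R -> z ^+ 2 = 52%:R * t - 180%:R ->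
  exists y, y ^+ 2 = t.
Proof.
move=> ht hz; have t2 := tm2 _ ht.
exists (16%:R * z / (t - 2%:R) ^+ 3).
have e := ident1 t; rewrite ht subrr mul0r -hz in e.
move/eqP: e; rewrite subr_eq0 => /eqP e.
rewrite expr_div_n exprMn -exprM /= -[(16%:R : F) ^+ 2]/(16%:R * 16%:R).
have -> : (16%:R * 16%:R : F) = 256%:R by ring.
rewrite -e mulfK //; by rewrite expf_neq0.
Qed.

Lemma case2 (t y : F) : t ^+ 2 = 12%:R -> y ^+ 2 = t ->
  exists z : F, z ^+ 4 + 360%:R * z ^+ 2 - 48%:R = 0.
Proof.
move=> ht hy; have t2 := tm2 _ ht.
pose z := y * (t - 2%:R) ^+ 3 / 16%:R.
have hz : z ^+ 2 = 52%:R * t - 180%:R.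
  apply: (mulfI n256).
  have e := ident1 t; rewrite ht subrr mul0r in e.
  move/eqP: e; rewrite subr_eq0 => /eqP <-.
  have -> : 256%:R * z ^+ 2 = y ^+ 2 * (t - 2%:R) ^+ 6.
    by rewrite /z; field; exact: n16.
  by rewrite hy mulrC.
exists z.
have -> : z ^+ 4 = (z ^+ 2) ^+ 2 by rewrite -exprM.
rewrite hz.
have -> : (52%:R * t - 180%:R) ^+ 2 + 360%:R * (52%:R * t - 180%:R) - 48%:R =
  2704%:R * (t ^+ 2 - 12%:R) :> F by ring.
by rewrite ht subrr mulr0.
Qed.

Lemma quartic (s : F) (i : F) : s ^+ 2 = 12%:R -> i ^+ 2 = -1 ->
  (exists z : F, z ^+ 4 + 360%:R * z ^+ 2 - 48%:R = 0) <-> (exists y : F, y ^+ 2 = s).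
Proof.
move=> hs hi; split; last by case=> y; exact: case2.
case=> z hz.
have : (z ^+ 2 - (52%:R * s - 180%:R)) * (z ^+ 2 - (52%:R * (- s) - 180%:R)) = 0.
  have -> : (z ^+ 2 - (52%:R * s - 180%:R)) * (z ^+ 2 - (52%:R * (- s) - 180%:R)) =
    (z ^+ 4 + 360%:R * z ^+ 2 - 48%:R) + 2704%:R * (12%:R - s ^+ 2) by ring.
  by rewrite hz hs subrr mulr0 addr0.
move/eqP; rewrite mulf_eq0 subr_eq0 [X in _ || X]subr_eq0 => /orP[] /eqP h.
  exact: case1 _ _ hs h.
have hs' : (- s) ^+ 2 = 12%:R by rewrite sqrrN.
have [y hy] := case1 _ _ hs' h.
by exists (i * y); rewrite exprMn hi hy mulN1r opprK.
Qed.

End Quartic.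

Section Roots.
Variable F : finFieldType.
Local Notation N := (#|F|.-1).

Lemma sqrt_m1 : (4 %| N)%N -> exists i : F, i ^+ 2 = -1.
Proof.
move=> d; have [w [w4 wj]] := @unity_root F _ d.
exists w; have : (w ^+ 2) ^+ 2 == 1 by rewrite -exprM w4.
rewrite sqrf_eq1 => /orP[/eqP h|/eqP //]; by move: (wj _ h).
Qed.

Lemma sqrt_2 : (8 %| N)%N -> exists t : F, t ^+ 2 = 2%:R.
Proof.
move=> d; have [w [w8 wj]] := @unity_root F _ d.
have w4 : w ^+ 4 = -1.
  have : (w ^+ 4) ^+ 2 == 1 by rewrite -exprM w8.
  by rewrite sqrf_eq1 => /orP[/eqP h|/eqP //]; by move: (wj _ h).
exists (w - w ^+ 3); apply/eqP; rewrite -subr_eq0.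
have -> : (w - w ^+ 3) ^+ 2 - 2%:R = (w ^+ 4 + 1) * (w ^+ 2 - 2%:R) by ring.
by rewrite w4 addNr mul0r.
Qed.

Lemma sqrt_m3 : (3 %| N)%N -> exists x : F, x ^+ 2 = - 3%:R.
Proof.
move=> d; have [w [w3 wj]] := @unity_root F _ d.
have w1 : w != 1 by apply/eqP => h; move: (wj 1%N); rewrite h expr1n => /(_ erefl).
have h : w ^+ 2 + w + 1 = 0.
  have e : (w - 1) * (w ^+ 2 + w + 1) = 0.
    have -> : (w - 1) * (w ^+ 2 + w + 1) = w ^+ 3 - 1 by ring.
    by rewrite w3 subrr.
  by move/eqP: e; rewrite mulf_eq0 subr_eq0 (negbTE w1) => /eqP.
exists (2%:R * w + 1); apply/eqP; rewrite -subr_eq0 opprK.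
have -> : (2%:R * w + 1) ^+ 2 + 3%:R = 4%:R * (w ^+ 2 + w + 1) :> F by ring.
by rewrite h mulr0.
Qed.


Lemma m3_conv (x : F) : (2%:R : F) != 0 -> (3%:R : F) != 0 ->
  x ^+ 2 = - 3%:R -> (3 %| N)%N.
Proof.
move=> n2 n3 hx.
pose w := (x - 1) / 2%:R.
have h : w ^+ 2 + w + 1 = 0.
  have -> : w ^+ 2 + w + 1 = (x ^+ 2 + 3%:R) / 4%:R.
    rewrite /w; field.
    rewrite n2 andbT; have -> : (4%:R : F) = 2%:R * 2%:R by ring.
    by rewrite mulf_neq0.
  by rewrite hx addNr mul0r.
have w3 : w ^+ 3 = 1.
  apply/eqP; rewrite -subr_eq0.
  have -> : w ^+ 3 - 1 = (w - 1) * (w ^+ 2 + w + 1) by ring.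
  by rewrite h mulr0.
have w1 : w != 1.
  apply/eqP => e; move: h; rewrite e expr1n.
  have -> : (1 + 1 + 1 : F) = 3%:R by ring.
  by move/eqP; rewrite (negbTE n3).
have w0 : w != 0 by apply/eqP => e; move: w3; rewrite e expr0n => /eqP; rewrite eq_sym oner_eq0.
have := @fermat F _ w0; rewrite -(expr_mod _ w3).
have : (N %% 3 < 3)%N by rewrite ltn_mod.
case e: (N %% 3)%N => [|[|[|//]]] _.
- by move=> _; rewrite /dvdn e.
- by rewrite expr1 => /eqP; rewrite (negbTE w1).
- move=> w2; move: w3; rewrite exprS w2 mulr1 => /eqP; by rewrite (negbTE w1).
Qed.

End Roots.

Lemma eulerE (F : finFieldType) (x : F) : odd #|F| -> x != 0 ->
  eul F x = 1 <-> exists y, y ^+ 2 = x.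
Proof.
move=> Fo x0; split; first exact: euler.
case=> y hy; have y0 : y != 0 by apply: contraNneq x0 => yz; rewrite -hy yz expr0n.
by rewrite /eul -hy -exprM mul2n -(@N_half _ Fo) (@fermat F _ y0).
Qed.

Lemma mult_ind (P : nat -> Prop) (m : nat) : (0 < m)%N -> P 1%N ->
  (forall q n, prime q -> (q %| m)%N -> (q * n %| m)%N -> P n -> P (q * n)%N) ->
  forall n, (n %| m)%N -> P n.
Proof.
move=> m0 P1 step n; elim: n {-2}n (leqnn n) => [|N IH] n.
  by rewrite leqn0 => /eqP ->; rewrite dvd0n => /eqP mz; rewrite mz in m0.
move=> nN nm; have n0 : (0 < n)%N by apply: dvdn_gt0 nm.
case: (ltngtP n 1) => [|n1|->] //; first by rewrite ltnS leqn0 (gtn_eqF n0).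
have pq := pdiv_prime n1; have qn := pdiv_dvd n.
have e : n = (pdiv n * (n %/ pdiv n))%N by rewrite mulnC divnK.
rewrite e; apply: step => //; first exact: dvdn_trans qn nm.
  by rewrite -e.
apply: IH; last by apply: dvdn_trans nm; apply: dvdn_div.
rewrite -ltnS; apply: leq_trans nN; rewrite ltn_Pdiv ?prime_gt1 //.
Qed.

Lemma int_to_nat (p a b : nat) : (p%:Z = a%:Z ^+ 2 - 12 * b%:Z ^+ 2) ->
  (a ^ 2 = p + 12 * b ^ 2)%N.
Proof. move=> h. lia. Qed.

Lemma sq_m3 (p q a b : nat) : prime q -> q != 2%N -> q != 3%N ->
  (a ^ 2 = p + 12 * b ^ 2)%N -> (q %| a)%N -> ~~ (q %| b)%N ->
  ((exists y : 'F_q, y ^+ 2 = p%:R) <-> (q %% 3 = 1)%N).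
Proof.
move=> pq q2 q3 H qa qb.
have chQ := pchar_Fp pq; have cardQ : #|'F_q| = q by rewrite card_Fp.
have n2 : (2%:R : 'F_q) != 0.
  by rewrite -(dvdn_pcharf chQ) dvdn_prime2 // eq_sym.
have n3 : (3%:R : 'F_q) != 0.
  by rewrite -(dvdn_pcharf chQ) dvdn_prime2 // eq_sym.
have B0 : (b%:R : 'F_q) != 0 by rewrite -(dvdn_pcharf chQ).
have A0 : (a%:R : 'F_q) = 0 by apply/eqP; rewrite -(dvdn_pcharf chQ).
have hp : (p%:R : 'F_q) = - 3%:R * (2%:R * b%:R) ^+ 2.
  have : ((a ^ 2)%:R : 'F_q) = (p + 12 * b ^ 2)%:R by rewrite H.
  rewrite natrX A0 expr0n /= natrD natrM natrX => /eqP; rewrite eq_sym addr_eq0 => /eqP ->.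
  ring.
have C0 : (2%:R * b%:R : 'F_q) != 0 by rewrite mulf_neq0.
have step1 : (exists y : 'F_q, y ^+ 2 = p%:R) <-> (exists x : 'F_q, x ^+ 2 = - 3%:R).
  split=> [[y hy]|[x hx]].
    exists (y / (2%:R * b%:R)); rewrite expr_div_n hy hp mulfK //.
    by rewrite expf_neq0.
  by exists (x * (2%:R * b%:R)); rewrite exprMn hx hp.
rewrite step1; split.
  case=> x hx; have := @m3_conv _ _ n2 n3 hx; rewrite cardQ.
  have := prime_gt1 pq; lia.
move=> h; apply: sqrt_m3; rewrite cardQ.
have := prime_gt1 pq; lia.
Qed.

Lemma p8 (p a b : nat) : (a ^ 2 = p + 12 * b ^ 2)%N -> odd a -> ~~ odd b ->
  (p %% 8 = 1)%N.
Proof.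
move=> H ao be.
have ak : a = (2 * a./2).+1.
  by rewrite -{1}(odd_double_half a) ao -mul2n add1n.
have bc : b = (2 * b./2)%N.
  by rewrite -{1}(odd_double_half b) (negbTE be) -mul2n add0n.
set k := a./2 in ak; set c := b./2 in bc.
have hk : ~~ odd (k * k.+1) by rewrite oddM /= andbN.
have kj : (k * k.+1 = 2 * (k * k.+1)./2)%N.
  by rewrite -{1}(odd_double_half (k * k.+1)) (negbTE hk) -mul2n add0n.
have e : (a ^ 2 = 4 * (k * k.+1) + 1)%N by rewrite ak; ring.
have e2 : (b ^ 2 = 4 * (c ^ 2))%N by rewrite bc; ring.
lia.
Qed.

Theorem theorem4 (p a b : nat) :
  prime p -> (p %% 12 = 1)%N -> (0 < a)%N -> (0 < b)%N ->
  (p%:Z = a%:Z ^+ 2 - 12 * b%:Z ^+ 2) ->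
  (exists z : 'F_p, z ^+ 4 + 360%:R * z ^+ 2 - 48%:R = 0)
  <-> (a %% 3 = 1)%N.
Proof.
move=> pp p12 a0 b0 /int_to_nat H.
have p4 : (p %% 4 = 1)%N by lia.
have p13 : (13 <= p)%N.
  have := prime_gt1 pp; lia.
have Hpodd : odd p by rewrite (divn_eq p 4) p4 addn1 /= oddM /= andbF.
have aodd : odd a.
  have : odd (a ^ 2) by rewrite H oddD Hpodd oddM.
  by rewrite oddX.
have pab : ~ ((p %| a)%N \/ (p %| b)%N).
  move=> hab.
  have p12n : ~~ (p %| 12)%N by apply/negP => /(dvdn_leq (isT : (0 < 12)%N)); rewrite leqNgt (leq_trans _ p13).
  have hb : (p %| b)%N -> (p %| a)%N.
    move=> pb; have : (p %| a ^ 2)%N.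
      by rewrite H dvdn_add // dvdn_mull // Euclid_dvdX ?pb.
    by rewrite Euclid_dvdX // andbT.
  have ha : (p %| a)%N -> (p %| b)%N.
    move=> pa; have : (p %| a ^ 2)%N by rewrite Euclid_dvdX ?pa.
    rewrite H dvdn_addr // Euclid_dvdM // (negbTE p12n) /= Euclid_dvdX //.
    by case/andP.
  have [pa pb] : (p %| a)%N /\ (p %| b)%N.
    by case: hab => h; [split; last apply: ha | split; first apply: hb].
  have : (p ^ 2 %| p)%N.
    have e : p = (a ^ 2 - 12 * b ^ 2)%N by rewrite H addnK.
    rewrite {2}e dvdn_sub //; first by rewrite dvdn_exp2r.
    by apply: dvdn_mull; rewrite dvdn_exp2r.
  move/dvdn_leq; rewrite prime_gt0 // => /(_ isT); rewrite leqNgt => /negP; apply.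
  by rewrite -mulnn -{1}[p]muln1 ltn_pmul2l ?prime_gt0 ?prime_gt1.
have pa : ~~ (p %| a)%N by apply/negP => h; apply: pab; left.
have pb : ~~ (p %| b)%N by apply/negP => h; apply: pab; right.
have a3 : ~~ (3 %| a)%N.
  apply/negP => h3; have : (3 %| p)%N.
    have : (3 %| a ^ 2)%N by rewrite Euclid_dvdX ?h3.
    by rewrite H dvdn_addl // dvdn_mulr.
  by rewrite dvdn_prime2 // => /eqP p3; rewrite -p3 in p13.
have chP := pchar_Fp pp; have cardP : #|'F_p| = p by rewrite card_Fp.
have Fodd : odd #|'F_p| by rewrite cardP.
have n2 : (2%:R : 'F_p) != 0.
  rewrite -(dvdn_pcharf chP); apply/negP => /(dvdn_leq (isT : (0 < 2)%N)); by rewrite leqNgt (leq_trans _ p13).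
have Eb : forall n, (n %| b)%N -> eul 'F_p n%:R = 1.
  apply: mult_ind => //; first by rewrite /eul expr1n.
  move=> q n pq qb qnb IH; rewrite natrM eulM IH mulr1.
    case: (q =P 2%N) => [q2|/eqP q2].
    have be : ~~ odd b by rewrite -dvdn2 -q2.
    have h8 := @p8 p a b H aodd be.
    have [t ht] : exists t : 'F_p, t ^+ 2 = 2%:R.
      by apply: sqrt_2; rewrite cardP; have := prime_gt1 pp; lia.
    by rewrite q2; apply/(@eulerE _ _ Fodd n2); exists t.
  have qodd : odd q.
    by case: (even_prime pq) => // e; rewrite e in q2.
  have qp : p != q by apply/eqP => e; move: pb; rewrite e qb.
  have := @QR p q pp pq qp qodd p4; rewrite /eul cardP => ->.
  exists a%:R; have chQ := pchar_Fp pq.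
  have B0 : (b%:R : 'F_q) = 0 by apply/eqP; rewrite -(dvdn_pcharf chQ).
  have : ((a ^ 2)%:R : 'F_q) = (p + 12 * b ^ 2)%:R by rewrite H.
  by rewrite natrX natrD natrM natrX B0 expr0n mulr0 addr0.
have Ea : forall n, (n %| a)%N -> eul 'F_p n%:R = if (n %% 3 == 1)%N then 1 else -1.
  apply: mult_ind => //; first by rewrite /eul expr1n.
  move=> q n pq qa qna IH; rewrite natrM eulM IH.
    have q2 : q != 2%N.
    by apply/eqP => e; move: qa; rewrite e dvdn2 aodd.
  have q3 : q != 3%N.
    by apply/eqP => e; move: qa; rewrite e (negbTE a3).
  have qodd : odd q.
    by case: (even_prime pq) => // e; rewrite e in q2.
  have qp : p != q by apply/eqP => e; move: pa; rewrite e qa.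
  have qb : ~~ (q %| b)%N.
    apply/negP => qb; have : (q %| p)%N.
      have : (q %| a ^ 2)%N by rewrite Euclid_dvdX ?qa.
      by rewrite H dvdn_addl // dvdn_mull // Euclid_dvdX ?qb.
    by rewrite dvdn_prime2 // eq_sym (negbTE qp).
  have eq : eul 'F_p q%:R = if (q %% 3 == 1)%N then 1 else -1.
    have := @QR p q pp pq qp qodd p4; rewrite (@sq_m3 p q a b pq q2 q3 H qa qb).
    have q0 : (q%:R : 'F_p) != 0 by rewrite -(dvdn_pcharf chP) dvdn_prime2.
    have := @eul_sq _ Fodd _ q0; rewrite /eul cardP => hs h.
    case: ifP => /eqP h3; first exact/h.
    case: hs => // /h; by [].
  have n3 : ~~ (3 %| n)%N.
    apply: contra a3 => h; apply: dvdn_trans h (dvdn_trans _ qna).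
    exact: dvdn_mull.
  have q3' : ~~ (3 %| q)%N by rewrite dvdn_prime2 // eq_sym.
  rewrite eq -modnMm.
  have : (q %% 3 = 1 \/ q %% 3 = 2)%N by lia.
  have : (n %% 3 = 1 \/ n %% 3 = 2)%N by lia.
  by case=> ->; case=> ->; rewrite /= ?mulr1 ?mul1r ?mulrNN ?mulr1.
have A0 : (a%:R : 'F_p) != 0 by rewrite -(dvdn_pcharf chP).
have B0 : (b%:R : 'F_p) != 0 by rewrite -(dvdn_pcharf chP).
have HAB : (a%:R : 'F_p) ^+ 2 = 12%:R * (b%:R) ^+ 2.
  have : ((a ^ 2)%:R : 'F_p) = (p + 12 * b ^ 2)%:R by rewrite H.
  by rewrite natrX natrD natrM natrX pchar_Fp_0 // add0r.
have [i hi] : exists i : 'F_p, i ^+ 2 = -1.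
  by apply: sqrt_m1; rewrite cardP; have := prime_gt1 pp; lia.
pose s := (a%:R : 'F_p) / b%:R.
have hs : s ^+ 2 = 12%:R by rewrite /s expr_div_n HAB mulfK // expf_neq0.
rewrite (@quartic _ n2 _ _ hs hi).
have AB0 : (a%:R * b%:R : 'F_p) != 0 by rewrite mulf_neq0.
have sq : (exists y, y ^+ 2 = s) <-> eul 'F_p (a%:R * b%:R) = 1.
  rewrite (@eulerE _ _ Fodd AB0); split=> [[y hy]|[y hy]].
    exists (y * b%:R); rewrite exprMn hy /s expr2 mulrA divfK //.
    exists (y / b%:R); rewrite expr_div_n hy /s expr2 invfM mulrA mulfK //.
rewrite sq eulM (Eb b (dvdnn b)) mulr1 (Ea a (dvdnn a)).
case: ifP => /eqP h //; split => // e.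
by move: n2; rewrite -[2%:R]/(1 + 1 : 'F_p) -{1}e addNr eqxx.
Qed.
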